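(* For the invertible $N$-component coupled KdV hierarchy (defined in the context), the one-forms $\gamma_s$ are local for all $s\in\mathbf Z$.
   Context: Let $N\ge1$, $\partial=\partial/\partial x$, $\partial^{-1}$ a formal inverse of $\partial$. Let $u_0,\dots,u_{N-1}$ be smooth functions of $(x,t)$, set $u_N=-1$, and let $\varepsilon_1,\dots,\varepsilon_{N-1}$ be real constants, $\varepsilon_0=\varepsilon_N=0$. Put $J_i=\frac14\varepsilon_i\partial^3+\frac12(u_i\partial+\partial u_i)$, so $J_0=\frac12(u_0\partial+\partial u_0)$ and $J_N=-\partial$, both invertible. Formal adjoint: $\partial^\dagger=-\partial$, multiplication operators self-adjoint, $(AB)^\dagger=B^\dagger A^\dagger$, transpose for matrices. Let $R$ be the $N\times N$ matrix operator with $R_{ij}=\delta_{i,j+1}$ ($1\le j\le N-1$) and $R_{iN}=-J_{i-1}J_N^{-1}$; $R$ is invertible. One-forms: $\gamma_0=(0,\dots,0,2)^T$, $\gamma_{-1}=(u_0^{-1/2},0,\dots,0)^T$, and for $s\ge1$, $\gamma_s=(R^\dagger)^s\gamma_0$, $\gamma_{-s}=((R^{-1})^\dagger)^{s-1}\gamma_{-1}$. A one-form is local if each component is a function of $u_0,\dots,u_{N-1}$ and finitely many of their $x$-derivatives (no $\partial^{-1}$ appears). *)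

(* Defs.v *)
From HB Require Import structures.
From mathcomp Require Import all_boot all_order all_algebra.
From mathcomp Require Import reals.
Set Implicit Arguments. Unset Strict Implicit. Unset Printing Implicit Defensive.
Import Order.TTheory GRing.Theory Num.Theory.
Local Open Scope ring_scope.

Section KdV.
Variables (R : realType) (A : comAlgType R).

Definition is_derivation (d : A -> A) : Prop :=
  [/\ forall x y, d (x + y) = d x + d y,
      forall (c : R) x, d (c *: x) = c *: d x &
      forall x y, d (x * y) = d x * y + x * d y].

Inductive diffgen (d : A -> A) (G : A -> Prop) : A -> Prop :=
| dg_gen x : G x -> diffgen d G x
| dg_const (c : R) : diffgen d G (c%:A)
| dg_add x y : diffgen d G x -> diffgen d G y -> diffgen d G (x + y)
| dg_mul x y : diffgen d G x -> diffgen d G y -> diffgen d G (x * y)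
| dg_der x : diffgen d G x -> diffgen d G (d x).

Variables (N : nat) (eps : 'I_N -> R) (u : 'I_N -> A) (w : A) (d : A -> A).

(* local differential functions: differential polynomials in the u_k
   (k = 0..N-1) and w = u_0^{-1/2}; no ∂^{-1} *)
Definition local (a : A) : Prop :=
  diffgen d (fun x => (exists k, x = u k) \/ x = w) a.

Definition J (k : 'I_N) (a : A) : A :=
  (eps k / 4) *: d (d (d a)) + (2^-1 : R) *: (u k * d a + d (u k * a)).

(* One-forms: vectors indexed by 'I_N (component i+1 of the paper is index i).
   Rdag_rel g g' <-> g' = R^dagger g, i.e. (with R = A D^{-1},
   D = diag(1,..,1,J_N), J_N = -∂)  D^dagger g' = A^dagger g:
     g'_j = g_{j+1}  (j < N)   and   ∂ g'_N = \sum_{i=1}^N J_{i-1} g_i.     *)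
Definition Rdag_rel (g g' : 'I_N -> A) : Prop :=
  (forall j k : 'I_N, (k : nat) = j.+1 -> g' j = g k) /\
  (forall l : 'I_N, (l : nat) = N.-1 -> d (g' l) = \sum_(k < N) J k (g k)).

Definition gamma0 (j : 'I_N) : A := if (j : nat) == N.-1 then 2%:A else 0.
Definition gammam1 (j : 'I_N) : A := if (j : nat) == 0%N then w else 0.

End KdV.

(* Main.v *)
Require Import Defs.
From HB Require Import structures.
From mathcomp Require Import all_boot all_order all_algebra.
From mathcomp Require Import reals.
From mathcomp Require Import ring zify.
From Stdlib Require Import FunctionalExtensionality.
Import Order.TTheory GRing.Theory Num.Theory.
Local Open Scope ring_scope.
Set Implicit Arguments. Unset Strict Implicit. Unset Printing Implicit Defensive.

Section Gen.
Variables (R : realType) (A : comAlgType R) (d : A -> A).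
Hypothesis Hd : is_derivation d.

Lemma dD x y : d (x + y) = d x + d y. Proof. by case: Hd. Qed.
Lemma dZ (c : R) x : d (c *: x) = c *: d x. Proof. by case: Hd. Qed.
Lemma dM x y : d (x * y) = d x * y + x * d y. Proof. by case: Hd. Qed.
Lemma d0 : d 0 = 0.
Proof. have H := dD 0 0; rewrite addr0 in H. by apply: (addrI (d 0)); rewrite addr0 -H. Qed.
Lemma dN x : d (- x) = - d x.
Proof. apply/eqP; rewrite -subr_eq0 opprK -dD addNr d0 //. Qed.
Lemma dB x y : d (x - y) = d x - d y. Proof. by rewrite dD dN. Qed.
Lemma d1 : d 1 = 0.
Proof. have H := dM 1 1; rewrite !mulr1 mul1r in H. by apply: (addrI (d 1)); rewrite addr0 -H. Qed.
Lemma dC (c : R) : d (c%:A) = 0. Proof. by rewrite dZ d1 scaler0. Qed.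
Lemma dsum (I : Type) (r : seq I) (P : pred I) (F : I -> A) :
  d (\sum_(i <- r | P i) F i) = \sum_(i <- r | P i) d (F i).
Proof. elim/big_rec2: _ => [|i y1 y2 _ <-]; [exact: d0 | exact: dD]. Qed.

Definition Jg (e : R) (v f : A) : A :=
  (e / 4) *: d (d (d f)) + (2^-1 : R) *: (v * d f + d (v * f)).
Definition Bg (e : R) (v f g : A) : A :=
  (e / 4) *: (f * d (d g) + d (d f) * g - d f * d g) + v * f * g.

Lemma dBg e v f g : d (Bg e v f g) = f * Jg e v g + g * Jg e v f.
Proof.
rewrite /Bg /Jg dD dZ !dB !dD !dM.
pose E : A := (e / 4 : R)%:A.
have HE : forall x : A, (e / 4) *: x = E * x by move=> x; rewrite /E mulr_algl.
pose q : A := (2^-1 : R)%:A.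
have Hq2 : forall x : A, (2^-1 : R) *: x = q * x by move=> x; rewrite /q mulr_algl.
rewrite !HE !Hq2.
have Hq : q + q = 1.
  have h2 : (2^-1 + 2^-1 : R) = 1 by field.
  by rewrite /q -scalerDl h2 scale1r.
transitivity (f * (E * d (d (d g)) + q * (v * d g + (d v * g + v * d g))) +
  g * (E * d (d (d f)) + q * (v * d f + (d v * f + v * d f))) + (1 - (q + q)) * (d v * f * g + v * f * d g + v * g * d f)).
  clearbody E q. ring.
by rewrite Hq subrr mul0r addr0.
Qed.

Lemma sum_only0 (n : nat) (P : nat -> bool) (F : nat -> A) :
  (forall k, P k = (k == 0)%N) -> \sum_(k < n.+1 | P k) F k = F 0%N.
Proof.
by move=> HP; rewrite (big_pred1 ord0) // => k; rewrite HP /=.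
Qed.

Lemma sum_none (n : nat) (P : nat -> bool) (F : nat -> A) :
  (forall k, P k = false) -> \sum_(k < n | P k) F k = 0.
Proof. by move=> HP; rewrite big_pred0 // => k; rewrite HP. Qed.

Lemma half_eq0 (y : A) : y *+ 2 = 0 -> y = 0.
Proof.
move=> H; have -> : y = (2^-1 : R) *: (y *+ 2).
  by rewrite -scaler_nat scalerA mulVf ?scale1r // pnatr_eq0.
by rewrite H scaler0.
Qed.

Section Series.
Variables (e : nat -> R) (v : nat -> A).

Definition Ez (x : nat -> A) n := \sum_(j < n.+1) Jg (e (n - j)) (v (n - j)) (x j).
Definition Kz (x : nat -> A) n :=
  \sum_(i < n.+1) \sum_(j < n.+1) \sum_(k < n.+1 | (i + j + k == n)%N)
     Bg (e k) (v k) (x i) (x j).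

Lemma inner_sum (n i : nat) (G : nat -> nat -> A) : (i <= n)%N ->
  \sum_(j < n.+1) \sum_(k < n.+1 | (i + j + k == n)%N) G j k =
  \sum_(j < (n - i).+1) G j (n - i - j)%N.
Proof.
move=> Hi.
rewrite (big_ord_widen n.+1 (fun j => G j (n - i - j)%N)); last by lia.
rewrite [in RHS]big_mkcond /=; apply: eq_bigr => j _.
case: (leqP (i + j) n) => Hij.
  have Hk : (n - i - j < n.+1)%N by lia.
  rewrite (_ : (j < (n - i).+1)%N = true); last by lia.
  rewrite (big_pred1 (Ordinal Hk)) // => k /=.
  by apply/eqP/eqP => [H|/(congr1 val) /= H]; [apply: val_inj => /=; lia | lia].
rewrite (_ : (j < (n - i).+1)%N = false); last by lia.
by rewrite big_pred0 // => k; apply/negbTE/eqP; lia.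
Qed.

Lemma dKz x n : d (Kz x n) = (\sum_(i < n.+1) x i * Ez x (n - i)) *+ 2.
Proof.
pose T1 := \sum_(i < n.+1) \sum_(j < n.+1) \sum_(k < n.+1 | (i + j + k == n)%N)
     x i * Jg (e k) (v k) (x j).
pose T2 := \sum_(i < n.+1) \sum_(j < n.+1) \sum_(k < n.+1 | (i + j + k == n)%N)
     x j * Jg (e k) (v k) (x i).
transitivity (T1 + T2).
  rewrite /Kz /T1 /T2 dsum -big_split /=; apply: eq_bigr => i _.
  rewrite dsum -big_split /=; apply: eq_bigr => j _.
  rewrite dsum -big_split /=; apply: eq_bigr => k _.
  exact: dBg.
have -> : T2 = T1.
  rewrite /T1 /T2 exchange_big /=; apply: eq_bigr => i _; apply: eq_bigr => j _.
  by apply: eq_bigl => k; rewrite (addnC i j).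
rewrite -mulr2n; congr (_ *+ 2).
rewrite /T1; apply: eq_bigr => i _.
rewrite (inner_sum (fun j k => x i * Jg (e k) (v k) (x j))); last by rewrite -ltnS.
by rewrite /Ez mulr_sumr.
Qed.

Lemma Ez0 x c : c * x 0%N = 1 -> (forall n, d (Kz x n) = 0) -> forall n, Ez x n = 0.
Proof.
move=> Hc HK n; elim/ltn_ind: n => n IH.
have := HK n; rewrite dKz => /half_eq0.
rewrite big_ord_recl /= subn0 big1 ?addr0 => [H|i _].
  by rewrite -[Ez x n]mul1r -Hc -mulrA H mulr0.
by rewrite IH ?mulr0 //; case: i => i /= Hi; rewrite /bump /= add1n; lia.
Qed.
End Series.
End Gen.

Section Cons.
Variables (R : realType) (A : comAlgType R) (d : A -> A).
Hypothesis Hd : is_derivation d.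
Variables (e : nat -> R) (v : nat -> A) (x0 c : A).
Hypothesis he0 : e 0%N = 0.

Definition Kp (f : nat -> A) n :=
  \sum_(i < n) \sum_(j < n) \sum_(k < n.+1 | (i + j + k == n)%N)
     Bg d (e k) (v k) (f i) (f j).

Lemma L1 n (G : nat -> nat -> A) :
  \sum_(j < n.+1) \sum_(k < n.+1 | (n + j + k == n)%N) G j k = G 0%N 0%N.
Proof.
rewrite big_ord_recl [X in _ + X]big1 ?addr0.
  apply: (@sum_only0 _ _ _ (fun k => (n + 0 + k == n)%N) (fun k => G 0%N k)) => k.
  by rewrite addn0 -{2}[n]addn0 eqn_add2l.
move=> j _; rewrite big_pred0 // => k; apply/negbTE/eqP; rewrite lift0; lia.
Qed.

Lemma L2 m (G : nat -> nat -> A) :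
  \sum_(i < m.+1) \sum_(k < m.+2 | (i + m.+1 + k == m.+1)%N) G i k = G 0%N 0%N.
Proof.
rewrite big_ord_recl [X in _ + X]big1 ?addr0.
  apply: (@sum_only0 _ _ _ (fun k => (0 + m.+1 + k == m.+1)%N) (fun k => G 0%N k)) => k.
  by rewrite add0n -{2}[m.+1]addn0 eqn_add2l.
move=> j _; rewrite big_pred0 // => k; apply/negbTE/eqP; rewrite lift0; lia.
Qed.

Lemma Bg0 a b : Bg d (e 0%N) (v 0%N) a b = v 0%N * a * b.
Proof. by rewrite /Bg he0 mul0r scale0r add0r. Qed.

Lemma Ksplit f n : (0 < n)%N -> Kz d e v f n = (v 0%N * f 0%N * f n) *+ 2 + Kp f n.
Proof.
case: n => // m _.
rewrite /Kz /Kp big_ord_recr /=.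
rewrite (L1 _ (fun j k => Bg d (e k) (v k) (f m.+1) (f j))).
under eq_bigr => i _ do rewrite big_ord_recr /=.
rewrite big_split /=.
rewrite (L2 _ (fun i k => Bg d (e k) (v k) (f i) (f m.+1))).
rewrite !Bg0; ring.
Qed.

Definition step (f : nat -> A) n := - (c * Kp f n).
Fixpoint X n : nat -> A :=
  if n is m.+1 then (fun i => if (i == m.+1)%N then step (X m) m.+1 else X m i)
  else (fun _ => x0).
Definition xs n := X n n.

Lemma X_xs n i : (i <= n)%N -> X n i = xs i.
Proof.
elim: n i => [|n IH] i Hi.
  by move: Hi; rewrite leqn0 => /eqP ->.
rewrite /=; case: eqP => [->|ne]; first by rewrite /xs /= eqxx.
by apply: IH; lia.
Qed.

Lemma Kp_ext f g n : (forall i, (i < n)%N -> f i = g i) -> Kp f n = Kp g n.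
Proof.
move=> H; apply: eq_bigr => i _; apply: eq_bigr => j _; apply: eq_bigr => k _.
by rewrite !H.
Qed.

Lemma xsS n : xs n.+1 = step xs n.+1.
Proof.
rewrite {1}/xs /= eqxx /step; congr (- (c * _)); apply: Kp_ext => i Hi.
by apply: X_xs; lia.
Qed.

Lemma xs0 : xs 0%N = x0. Proof. by []. Qed.

Hypothesis hc : (v 0%N * x0 * c) *+ 2 = 1.

Lemma Kxs n : (0 < n)%N -> Kz d e v xs n = 0.
Proof.
move=> Hn; rewrite Ksplit //; case: n Hn => // n _.
rewrite xsS /step xs0.
transitivity (Kp xs n.+1 * (1 - (v 0%N * x0 * c) *+ 2)); first by ring.
by rewrite hc subrr mulr0.
Qed.

Lemma Kxs0 : Kz d e v xs 0 = v 0%N * x0 * x0.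
Proof. by rewrite /Kz !big_ord1 big_mkcond big_ord1 /= Bg0. Qed.

Variable c' : A.
Hypothesis hc' : c' * x0 = 1.
Hypothesis hK0 : d (v 0%N * x0 * x0) = 0.

Lemma Exs n : Ez d e v xs n = 0.
Proof.
apply: (Ez0 Hd hc') => m; case: m => [|m]; first by rewrite Kxs0.
by rewrite Kxs // (d0 Hd).
Qed.

Variable P : A -> Prop.
Hypotheses (PC : forall r : R, P r%:A) (PD : forall a b, P a -> P b -> P (a + b))
  (PM : forall a b, P a -> P b -> P (a * b)) (Pd : forall a, P a -> P (d a))
  (Pv : forall k, P (v k)) (Px0 : P x0) (Pc : P c).

Lemma PZ (r : R) a : P a -> P (r *: a).
Proof. by move=> Ha; rewrite -mulr_algl; apply: PM. Qed.
Lemma PN a : P a -> P (- a).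
Proof. by move=> Ha; rewrite -scaleN1r; apply: PZ. Qed.
Lemma P0 : P 0. Proof. by rewrite -(scale0r 1); apply: PC. Qed.
Lemma Psum (I : Type) (r : seq I) (Q : pred I) (F : I -> A) :
  (forall i, P (F i)) -> P (\sum_(i <- r | Q i) F i).
Proof. by move=> H; elim/big_rec: _ => [|i y _ Hy]; [exact: P0 | apply: PD]. Qed.

Lemma PBg k a b : P a -> P b -> P (Bg d (e k) (v k) a b).
Proof.
move=> Ha Hb; rewrite /Bg; apply: PD; last by apply: PM => //; apply: PM.
apply: PZ; apply: PD; first apply: PD.
- by apply: PM => //; do 2 apply: Pd.
- by apply: PM => //; do 2 apply: Pd.
- by apply: PN; apply: PM; apply: Pd.
Qed.

Lemma Pxs n : P (xs n).
Proof.
suff H : forall m i, P (X m i) by apply: H.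
elim=> [|m IH] i /=; first by [].
case: eqP => _ //; rewrite /step; apply: PN; apply: PM => //.
by apply: Psum => i1; apply: Psum => j; apply: Psum => k; apply: PBg.
Qed.
End Cons.

Section Spec.
Variables (R : realType) (A : comAlgType R) (N : nat) (eps : 'I_N -> R)
  (u : 'I_N -> A) (w : A) (d : A -> A).
Hypotheses (HN : (0 < N)%N) (Heps0 : forall k : 'I_N, (k : nat) = 0%N -> eps k = 0)
  (Hd : is_derivation d) (Hw : forall k : 'I_N, (k : nat) = 0%N -> w ^+ 2 * u k = 1).

Definition Ee (n : nat) : R := \sum_(i < N | (i : nat) == n) eps i.
Definition Ue (n : nat) : A :=
  \sum_(i < N | (i : nat) == n) u i - (if n == N then 1 else 0).
Definition Jp m f := Jg d (Ee m) (Ue m) f.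

Lemma Ee_ord (i : 'I_N) : Ee i = eps i.
Proof. by rewrite /Ee (big_pred1 i). Qed.
Lemma Ue_ord (i : 'I_N) : Ue i = u i.
Proof.
rewrite /Ue (big_pred1 i) // ifN ?subr0 //.
by apply/eqP => H; have := ltn_ord i; rewrite H ltnn.
Qed.
Lemma Ee_ge n : (N <= n)%N -> Ee n = 0.
Proof. by move=> Hn; rewrite /Ee big_pred0 // => i; apply/negbTE/eqP => H; have := ltn_ord i; lia. Qed.
Lemma Ue_ge n : (N <= n)%N -> Ue n = - (if n == N then 1 else 0).
Proof.
by move=> Hn; rewrite /Ue big_pred0 ?add0r // => i; apply/negbTE/eqP => H; have := ltn_ord i; lia.
Qed.

Lemma Jg00 f : Jg d 0 0 f = 0.
Proof. by rewrite /Jg mul0r scale0r !mul0r (d0 Hd) add0r addr0 scaler0. Qed.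

Lemma Jg_0 e v : Jg d e v 0 = 0.
Proof. by rewrite /Jg !(d0 Hd) mulr0 (d0 Hd) addr0 !scaler0 addr0. Qed.

Lemma Jp_ord (i : 'I_N) f : Jp i f = J eps u d i f.
Proof. by rewrite /Jp Ee_ord Ue_ord. Qed.

Lemma Jp_N f : Jp N f = - d f.
Proof.
rewrite /Jp Ee_ge // Ue_ge // eqxx /Jg mul0r scale0r add0r !mulN1r (dN Hd).
have h2 : (2^-1 + 2^-1 : R) = 1 by field.
by rewrite -opprD scalerN scalerDr -scalerDl h2 scale1r.
Qed.

Lemma Jp_gt n f : (N < n)%N -> Jp n f = 0.
Proof.
move=> Hn; rewrite /Jp Ee_ge ?(ltnW Hn) // Ue_ge ?(ltnW Hn) // ifN ?oppr0 ?Jg00 //.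
by apply/eqP => H; move: Hn; rewrite H ltnn.
Qed.


Definition er k : R := if (k <= N)%N then Ee (N - k) else 0.
Definition vr k : A := if (k <= N)%N then Ue (N - k) else 0.
Lemma Jr k f : Jg d (er k) (vr k) f = if (k <= N)%N then Jp (N - k) f else 0.
Proof. by rewrite /er /vr; case: ifP => _; rewrite ?Jg00. Qed.

Definition cpos : A := (- 4^-1 : R)%:A.
Definition ps := xs d er vr (2 : R)%:A cpos.
Definition ns := xs d Ee Ue w ((2^-1 : R) *: w).

Lemma alg (r s : R) : r%:A * s%:A = (r * s)%:A :> A.
Proof. by rewrite -scalerAl mul1r scalerA. Qed.

Lemma er0 : er 0 = 0. Proof. by rewrite /er leq0n subn0 Ee_ge. Qed.
Lemma vr0 : vr 0 = (-1 : R)%:A.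
Proof. by rewrite /vr leq0n subn0 Ue_ge // eqxx scaleN1r. Qed.

Lemma Eps t : Ez d er vr ps t = 0.
Proof.
apply: (@Exs _ _ _ Hd _ _ _ _ _ _ ((2^-1 : R)%:A)).
- exact: er0.
- rewrite vr0 /cpos !alg scalerMnl.
  have -> : (((-1) * 2 * - 4^-1) *+ 2 : R) = 1 by rewrite -mulr_natr; field.
  by rewrite scale1r.
- rewrite alg; have -> : ((2^-1 * 2) : R) = 1 by field.
  by rewrite scale1r.
- by rewrite vr0 !alg (dC Hd).
Qed.

Let i0 : 'I_N := Ordinal HN.

Lemma Ee0 : Ee 0 = 0.
Proof. by change (Ee i0 = 0); rewrite Ee_ord Heps0. Qed.
Lemma Ue0 : Ue 0 = u i0.
Proof. by change (Ue i0 = u i0); rewrite Ue_ord. Qed.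

Lemma Ens r : Ez d Ee Ue ns r = 0.
Proof.
have Hw0 := Hw (k := i0) erefl.
apply: (@Exs _ _ _ Hd _ _ _ _ _ _ (w * u i0)).
- exact: Ee0.
- rewrite Ue0 -scalerAr scalerMnl.
  have -> : ((2^-1 *+ 2) : R) = 1 by rewrite -mulr_natr; field.
  by rewrite scale1r -Hw0 expr2; ring.
- by rewrite -Hw0 expr2; ring.
- by rewrite Ue0 (_ : u i0 * w * w = 1) ?(d1 Hd) // -Hw0 expr2; ring.
Qed.

Definition aseq (z : int) : A :=
  match z with
  | Posz n => ps n
  | Negz m => if (N <= m.+1)%N then ns (m.+1 - N) else 0
  end.

Lemma a_sub (t k : nat) : aseq (t%:Z - k%:Z) =
  if (k <= t)%N then ps (t - k) else if (N <= k - t)%N then ns (k - t - N) else 0.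
Proof.
case: leqP => h; first by rewrite subzn.
have -> : t%:Z - k%:Z = Negz (k - t).-1 by rewrite NegzE; lia.
by rewrite /= prednK //; lia.
Qed.

Lemma sum_cmp n1 n2 (F G : nat -> A) :
  (forall k, (k < n1 + n2)%N ->
     (if (k < n1)%N then F k else 0) = (if (k < n2)%N then G k else 0)) ->
  \sum_(k < n1) F k = \sum_(k < n2) G k.
Proof.
move=> H.
rewrite (big_ord_widen (n1 + n2) F) ?leq_addr // (big_ord_widen (n1 + n2) G) ?leq_addl //.
by rewrite big_mkcond [RHS]big_mkcond; apply: eq_bigr => k _; apply: H.
Qed.

Lemma sum_rev n (F : nat -> A) : \sum_(k < n) F k = \sum_(k < n) F (n - k.+1)%N.
Proof. by rewrite -(big_mkord xpredT F) big_rev_mkord subn0. Qed.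

Lemma Zpos t : (0 < t)%N ->
  \sum_(m < N.+1) Jp m (aseq ((t + m)%:Z - N%:Z)) = 0.
Proof.
move=> Ht; rewrite -[RHS](Eps t) /Ez.
etransitivity; first exact: (sum_rev N.+1 (fun m => Jp m (aseq ((t + m)%:Z - N%:Z)))).
etransitivity; last (symmetry; exact: (sum_rev t.+1 (fun j => Jg d (er (t - j)) (vr (t - j)) (ps j)))).
rewrite /=.
apply: (@sum_cmp N.+1 t.+1 (fun m => Jp (N.+1 - m.+1) (aseq ((t + (N.+1 - m.+1))%:Z - N%:Z))) (fun j => Jg d (er (t - (t.+1 - j.+1))) (vr (t - (t.+1 - j.+1))) (ps (t.+1 - j.+1)))) => k _ /=.
case: ifPn => h1; case: ifPn => h2 //.
- rewrite Jr a_sub ifT; last by lia.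
  rewrite ifT; last by lia.
  by congr (Jp _ (ps _)); lia.
- rewrite a_sub ifF; last by lia.
  by rewrite ifF /Jp ?Jg_0 //; lia.
- by rewrite Jr ifF //; lia.
Qed.

Lemma Zneg r : (0 < r)%N ->
  \sum_(m < N.+1) Jp m (aseq (m%:Z - (r + N)%:Z)) = 0.
Proof.
move=> Hr; rewrite -[RHS](Ens r) /Ez.
etransitivity; last (symmetry; exact: (sum_rev r.+1 (fun j => Jg d (Ee (r - j)) (Ue (r - j)) (ns j)))).
rewrite /=.
apply: (@sum_cmp N.+1 r.+1 (fun m => Jp m (aseq (m%:Z - (r + N)%:Z))) (fun j => Jg d (Ee (r - (r.+1 - j.+1))) (Ue (r - (r.+1 - j.+1))) (ns (r.+1 - j.+1)))) => k _ /=.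
case: ifPn => h1; case: ifPn => h2 //.
- rewrite a_sub ifF; last by lia.
  rewrite ifT; last by lia.
  by rewrite /Jp; congr (Jg d (Ee _) (Ue _) (ns _)); lia.
- rewrite a_sub ifF; last by lia.
  by rewrite ifF /Jp ?Jg_0 //; lia.
- by rewrite -/(Jp _ _) Jp_gt //; lia.
Qed.

Lemma rel_from_Z (tau : int) :
  \sum_(m < N.+1) Jp m (aseq (tau + m%:Z - N%:Z)) = 0 ->
  d (aseq tau) = \sum_(k < N) J eps u d k (aseq (tau + k%:Z - N%:Z)).
Proof.
rewrite big_ord_recr /= Jp_N addrK => /eqP; rewrite subr_eq0 => /eqP <-.
by apply: eq_bigr => k _; rewrite Jp_ord.
Qed.

Definition gam (s : int) (j : 'I_N) : A := aseq (s + j%:Z + 1 - N%:Z).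

Lemma gam_shift (s : int) : s <> -1 -> Rdag_rel eps u d (gam s) (gam (s + 1)).
Proof.
move=> Hs; split.
  by move=> j k Hk; rewrite /gam; congr aseq; lia.
move=> l Hl; rewrite /gam.
have -> : s + 1 + l%:Z + 1 - N%:Z = s + 1 by lia.
have -> : \sum_(k < N) J eps u d k (aseq (s + k%:Z + 1 - N%:Z)) =
          \sum_(k < N) J eps u d k (aseq ((s + 1) + k%:Z - N%:Z)).
  by apply: eq_bigr => k _; congr (J _ _ _ _ (aseq _)); lia.
apply: rel_from_Z.
move: Hs; case: s => [s|s] Hs.
- rewrite -[RHS](Zpos (t := s.+1)) //; apply: eq_bigr => m _; congr (Jp _ (aseq _)); lia.
- move: Hs; case: s => [|s] Hs.
  + by exfalso; apply: Hs; rewrite NegzE.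
  + rewrite -[RHS](Zneg (r := s.+1)) //; apply: eq_bigr => m _; congr (Jp _ (aseq _)).
    rewrite NegzE; lia.
Qed.

Local Notation Loc := (local u w d).
Lemma L0 : Loc 0. Proof. by rewrite -(scale0r 1); apply: dg_const. Qed.
Lemma LN a : Loc a -> Loc (- a).
Proof.
move=> H; have -> : - a = (-1 : R)%:A * a by rewrite mulr_algl scaleN1r.
by apply: dg_mul => //; apply: dg_const.
Qed.
Lemma Lsum (I : Type) (r : seq I) (Q : pred I) (F : I -> A) :
  (forall i, Loc (F i)) -> Loc (\sum_(i <- r | Q i) F i).
Proof. move=> H; apply: (big_rec (fun y => Loc y)); [exact: L0 | move=> i y _ Hy; apply: dg_add; [exact: H | exact: Hy]]. Qed.
Lemma LUe n : Loc (Ue n).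
Proof.
rewrite /Ue; apply: dg_add; first by apply: Lsum => i; apply: dg_gen; left; exists i.
apply: LN; case: ifP => _; last exact: L0.
by rewrite -(scale1r 1); apply: dg_const.
Qed.
Lemma Lw : Loc w. Proof. by apply: dg_gen; right. Qed.

Lemma Laseq z : Loc (aseq z).
Proof.
case: z => [n|m] /=.
  apply: (@Pxs _ _ _ _ _ _ _ (fun a => Loc a)) => //; try by [apply: dg_const | apply: dg_add | apply: dg_mul | apply: dg_der].
  by move=> k; rewrite /vr; case: ifP => _; [apply: LUe | exact: L0].
case: ifP => _; last exact: L0.
apply: (@Pxs _ _ _ _ _ _ _ (fun a => Loc a)) => //; try by [apply: dg_const | apply: dg_add | apply: dg_mul | apply: dg_der].
- exact: LUe.
- exact: Lw.
- by rewrite -mulr_algl; apply: dg_mul; [apply: dg_const | exact: Lw].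
Qed.
End Spec.

Unset Implicit Arguments.
Set Strict Implicit.

Theorem mainTheorem7 (R : realType) (A : comAlgType R) (N : nat)
  (eps : 'I_N -> R) (u : 'I_N -> A) (w : A) (d : A -> A) :
  (0 < N)%N ->
  (forall k : 'I_N, (k : nat) = 0%N -> eps k = 0) ->
  is_derivation d ->
  (forall k : 'I_N, (k : nat) = 0%N -> w ^+ 2 * u k = 1) ->
  exists gamma : int -> 'I_N -> A,
    [/\ gamma 0 = @gamma0 R A N,
        gamma (-1) = @gammam1 R A N w,
        (forall s : nat,
            Rdag_rel eps u d (gamma s%:Z) (gamma (s.+1)%:Z)),
        (forall s : nat,
            Rdag_rel eps u d (gamma (- (s.+2)%:Z)) (gamma (- (s.+1)%:Z))) &
        (forall (s : int) (i : 'I_N), local u w d (gamma s i))].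
Proof.
move=> HN Heps Hd Hw.
exists (gam eps u w d); split.
- apply: functional_extensionality => j; rewrite /gam /gamma0.
  have -> : 0 + (j : nat)%:Z + 1 - N%:Z = (j.+1)%:Z - N%:Z by lia.
  rewrite a_sub //; have := ltn_ord j; case: ifP => h Hj.
    by rewrite ifT; [rewrite (_ : (j.+1 - N = 0)%N) //; lia | apply/eqP; lia].
  by rewrite ifF ?ifF //; apply/negbTE; [apply/negP | apply/eqP]; lia.
- apply: functional_extensionality => j; rewrite /gam /gammam1.
  have -> : -1 + (j : nat)%:Z + 1 - N%:Z = (j : nat)%:Z - N%:Z by lia.
  have Hj := ltn_ord j.
  rewrite a_sub // ifF; last by apply/negbTE; rewrite -ltnNge.
  case: ifP => h.
    by rewrite ifT; [rewrite (_ : (N - j - N = 0)%N) //; lia | apply/eqP; lia].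
  by rewrite ifF //; apply/negbTE/eqP; lia.
- move=> s; rewrite (_ : (s.+1)%:Z = s%:Z + 1); last by lia.
  by apply: gam_shift => //; lia.
- move=> s; rewrite (_ : - (s.+1)%:Z = - (s.+2)%:Z + 1); last by lia.
  by apply: gam_shift => //; lia.
- by move=> s i; apply: Laseq.
Qed.
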